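(* Let $d_{21}$ be the 3-dimensional complex associative algebra with basis $\{e_1,e_2,e_3\}$ and nonzero products $e_1e_1=e_3$, $e_1e_2=e_3$, $e_2e_1=-e_3$. For every Hermitian inner product $\langle\cdot,\cdot\rangle$ on $d_{21}$, $(d_{21},\langle\cdot,\cdot\rangle)$ is not a critical point of $F_3:\mathcal A_3\to\mathbb R$. Equivalently, no point of the orbit $\mathrm{GL}(3).[d_{21}]\subset\mathbb PV_3$ is a critical point of $F_3$.
   Context: $V_3$ is the space of bilinear maps $\mathbb C^3\times\mathbb C^3\to\mathbb C^3$ with standard Hermitian structures and $\mathrm{GL}(3)$-action $g.\mu(X,Y)=g\mu(g^{-1}X,g^{-1}Y)$; $\mathcal A_3$ is the projectivized set of associative algebras. An algebra with a Hermitian inner product is viewed as a point of $\mathbb PV_3$ via an orthonormal basis. $L^\mu_XY=\mu(X,Y)$, $R^\mu_XY=\mu(Y,X)$, $\mathrm M_\mu=2\sum_i L^\mu_{X_i}(L^\mu_{X_i})^*-2\sum_i (L^\mu_{X_i})^*L^\mu_{X_i}-2\sum_i (R^\mu_{X_i})^*R^\mu_{X_i}$ ($\{X_i\}$ orthonormal), $F_3([\mu])=\operatorname{tr}\mathrm M_\mu^2/\|\mu\|^4$; $[\mu]$ is a critical point iff $\mathrm M_\mu=c_\mu I+D_\mu$ with $c_\mu\in\mathbb R$ and $D_\mu$ a derivation of $\mu$. *)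

(* Defs.v *)
(* The field of complex numbers is R[i] = complex R for a
   real-number structure R : realType (mathcomp-analysis), i.e. literally C. *)
From HB Require Import structures.
From mathcomp Require Import all_boot all_order all_algebra.
From mathcomp Require Import complex.
From mathcomp Require Import reals.
Set Implicit Arguments. Unset Strict Implicit. Unset Printing Implicit Defensive.
Import Order.TTheory GRing.Theory Num.Theory.
Local Open Scope ring_scope.

Section Defs.
Variable C : numClosedFieldType.

(* A bilinear map mu : C^3 x C^3 -> C^3 (a point of V_3), given by its values
   on the standard basis: mu i j = mu(e_i, e_j) (a column vector). *)
Definition bilin := 'I_3 -> 'I_3 -> 'cV[C]_3.

Definition ev (i : 'I_3) : 'cV[C]_3 := delta_mx i 0.

Definition bapp (mu : bilin) (x y : 'cV[C]_3) : 'cV[C]_3 :=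
  \sum_(i < 3) \sum_(j < 3) (x i 0 * y j 0) *: mu i j.

Definition act (g : 'M[C]_3) (mu : bilin) : bilin :=
  fun i j => g *m bapp mu (invmx g *m ev i) (invmx g *m ev j).

Definition Lop (mu : bilin) (i : 'I_3) : 'M[C]_3 :=
  \matrix_(k, j) (mu i j) k 0.
Definition Rop (mu : bilin) (i : 'I_3) : 'M[C]_3 :=
  \matrix_(k, j) (mu j i) k 0.

(* adjoint w.r.t. the standard Hermitian inner product: conjugate transpose *)
Definition adj (A : 'M[C]_3) : 'M[C]_3 := \matrix_(i, j) (A j i)^*.

Definition Mmu (mu : bilin) : 'M[C]_3 :=
  \sum_(i < 3) (2%:R *: (Lop mu i *m adj (Lop mu i)))
  - \sum_(i < 3) (2%:R *: (adj (Lop mu i) *m Lop mu i))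
  - \sum_(i < 3) (2%:R *: (adj (Rop mu i) *m Rop mu i)).

Definition is_derivation (mu : bilin) (D : 'M[C]_3) : Prop :=
  forall x y : 'cV[C]_3,
    D *m bapp mu x y = bapp mu (D *m x) y + bapp mu x (D *m y).

(* [mu] is a critical point of F_3:  M_mu = c I + D, c real, D a derivation *)
Definition critical (mu : bilin) : Prop :=
  exists c : C, exists D : 'M[C]_3,
    c \is Num.real /\ is_derivation mu D /\ Mmu mu = c%:M + D.

(* the algebra d_21: e1e1 = e3, e1e2 = e3, e2e1 = -e3, other products 0
   (indices 0,1,2 stand for e1,e2,e3) *)
Definition d21 : bilin := fun i j =>
  if (i == 0 :> nat) && (j == 0 :> nat) then ev (inord 2)
  else if (i == 0 :> nat) && (j == 1 :> nat) then ev (inord 2)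
  else if (i == 1 :> nat) && (j == 0 :> nat) then - ev (inord 2)
  else 0.

End Defs.

(* Main.v *)
Require Import Defs.
From HB Require Import structures.
From mathcomp Require Import all_boot all_order all_algebra.
From mathcomp Require Import complex.
From mathcomp Require Import reals.
From mathcomp Require Import ring.
Import Order.TTheory GRing.Theory Num.Theory.
Local Open Scope ring_scope.

Section S.
Variable C : numClosedFieldType.

Definition i0 : 'I_3 := @Ordinal 3 0 isT.
Definition i1 : 'I_3 := @Ordinal 3 1 isT.
Definition i2 : 'I_3 := @Ordinal 3 2 isT.

Lemma sum3 (V : nmodType) (F : 'I_3 -> V) : \sum_(i < 3) F i = F i0 + F i1 + F i2.
Proof.
rewrite !big_ord_recr big_ord0 /= add0r.
by congr (F _ + F _ + F _); apply: val_inj.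
Qed.

Lemma sum1 (V : nmodType) (F : 'I_1 -> V) : \sum_(i < 1) F i = F 0.
Proof. by rewrite big_ord_recr big_ord0 /= add0r; congr F; apply: val_inj. Qed.

Lemma inord2 : inord 2 = i2 :> 'I_3.
Proof. by apply: val_inj; rewrite /= inordK. Qed.

Definition beta (u z : 'cV[C]_3) : C :=
  u i0 0 * z i0 0 + u i0 0 * z i1 0 - u i1 0 * z i0 0.

Lemma bapp_d21 (x y : 'cV[C]_3) : bapp (d21 C) x y = beta x y *: ev C i2.
Proof.
rewrite /bapp !sum3 /d21 /= inord2 /beta.
by rewrite !scaler0 !addr0 scalerN !scalerDl scaleNr.
Qed.


Lemma act_d21 (g : 'M[C]_3) i j :
  act g (d21 C) i j = beta (invmx g *m ev C i) (invmx g *m ev C j) *: (g *m ev C i2).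
Proof. by rewrite /act bapp_d21 scalemxAr. Qed.

Lemma bappE (g : 'M[C]_3) x y :
  bapp (act g (d21 C)) x y = beta (invmx g *m x) (invmx g *m y) *: (g *m ev C i2).
Proof.
rewrite /bapp.
under eq_bigr do under eq_bigr do rewrite act_d21 scalerA.
under eq_bigr do rewrite -scaler_suml.
rewrite -scaler_suml; congr (_ *: _).
rewrite /beta /ev !sum3 !mxE !sum3 !mxE /=.
ring.
Qed.

Definition Qmat (h : 'M[C]_3) : 'M[C]_3 :=
  \matrix_(k, l) \sum_m ((h m k)^* * h m l + (h k m)^* * h l m).

Lemma MmuE (h : 'M[C]_3) (v : 'cV[C]_3) (mu : bilin C) :
  (forall i j, mu i j = h i j *: v) ->
  Mmu mu = (2 * \sum_i \sum_j h i j * (h i j)^*) *: (v *m \row_m (v m 0)^*)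
           - (2 * \sum_m v m 0 * (v m 0)^*) *: Qmat h.
Proof.
move=> hmu; apply/matrixP => k l.
rewrite /Mmu !mxE !summxE.
rewrite !sum3 ?sum1 ?mxE ?sum3 ?sum1 /Lop /Rop /adj ?mxE !hmu ?mxE.
rewrite ?rmorphM.
ring.
Qed.

Lemma ord3 (i : 'I_3) : i = i0 \/ i = i1 \/ i = i2.
Proof.
case: i => [[|[|[|m]]] Hm].
- by left; apply: val_inj.
- by right; left; apply: val_inj.
- by right; right; apply: val_inj.
- by [].
Qed.

Lemma colev (A : 'M[C]_3) i k : (A *m ev C i) k 0 = A k i.
Proof. by rewrite /ev !mxE !sum3 !mxE; case: (ord3 i) => [->|[->|->]] /=; ring. Qed.

Definition hmat (w q : 'I_3 -> C) : 'M[C]_3 :=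
  \matrix_(i, j) (w i * w j + w i * q j - q i * w j).

Lemma normsum3 (f : 'I_3 -> C) : \sum_m f m * (f m)^* = 0 -> forall m, f m = 0.
Proof.
rewrite sum3 -!normCK => /eqP.
rewrite !paddr_eq0 ?addr_ge0 ?exprn_ge0 // !sqrf_eq0 !normr_eq0.
by case/andP=> [/andP[/eqP a /eqP b] /eqP c] m; case: (ord3 m) => [->|[->|->]].
Qed.

Lemma key_identity (w q : 'I_3 -> C) :
  let Q := Qmat (hmat w q) in
  2 * (\sum_l (\sum_k w k * Q k l) * (w l)^*) - (\sum_m w m * (w m)^*) * \tr Q
  = 2 * (\sum_m w m * (w m)^*) ^+ 3.
Proof.
rewrite /= /mxtrace !sum3 /Qmat !mxE !sum3 /hmat !mxE.
rewrite ?rmorphD ?rmorphB ?rmorphM.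
ring.
Qed.

Lemma Qmat_mulv (h : 'M[C]_3) (v : 'cV[C]_3) k :
  (Qmat h *m v) k 0 = \sum_m ((h m k)^* * (\sum_l h m l * v l 0)
                     + (h k m)^* * (\sum_l h l m * v l 0)).
Proof. by rewrite /Qmat !mxE !sum3 !mxE !sum3; ring. Qed.

Lemma scal_eq (s1 s2 t1 t2 : C) (x y : 'cV[C]_3) :
  s1 *: x = s2 *: y -> s1 = t1 -> s2 = t2 -> t1 *: x = t2 *: y.
Proof. by move=> E <- <-. Qed.

Lemma scal_cancel (s1 s2 : C) (v : 'cV[C]_3) : v != 0 -> s1 *: v = s2 *: v -> s1 = s2.
Proof.
move=> vn0 /eqP; rewrite -subr_eq0 -scalerBl scalemx_eq0 (negPf vn0) orbF subr_eq0.
by move/eqP.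
Qed.

Theorem main (g : 'M[C]_3) : g \in unitmx -> ~ critical (act g (d21 C)).
Proof.
move=> gU [c [D [_ [hD hM]]]].
set G := invmx g; set v := g *m ev C i2.
have Gg : G *m g = 1 := mulVmx gU.
have gG : g *m G = 1 := mulmxV gU.
set h := hmat (fun k => G i0 k) (fun k => G i1 k).
have hmu : forall i j, act g (d21 C) i j = h i j *: v.
  by move=> i j; rewrite act_d21 /beta !colev /h mxE.
set nv := \sum_m v m 0 * (v m 0)^*.
set al := 2 * \sum_i \sum_j h i j * (h i j)^*.
have MmE := @MmuE _ _ _ hmu; rewrite -/nv -/al in MmE.
set Q := Qmat h in MmE.
set K := G *m Q *m g.
have Gv : G *m v = ev C i2 by rewrite /v mulmxA Gg mul1mx.
have vn0 : v != 0.
  apply/eqP => v0; move: Gv; rewrite v0 mulmx0 => /(congr1 (fun M : 'cV[C]_3 => M i2 0)).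
  by rewrite /ev !mxE eqxx /= => /eqP; rewrite eq_sym oner_eq0.
have nvn0 : nv != 0.
  apply/eqP => /normsum3 nv0; move/eqP: vn0; apply; apply/matrixP => k j.
  by rewrite (ord1 j) nv0 mxE.
have DE : D = Mmu (act g (d21 C)) - c%:M by rewrite hM addrC addKr.
set Dt := G *m D *m g.
have DtE k a : k != i2 -> Dt k a = - (2 * nv) * K k a - c * (k == a)%:R.
  move=> kn2.
  have -> : Dt = al *: (G *m v *m (\row_m (v m 0)^* *m g)) - (2 * nv) *: K - c%:M.
    rewrite /Dt DE MmE !mulmxBr !mulmxBl -!scalemxAr -!scalemxAl !mulmxA.
    by rewrite mul_mx_scalar -scalemxAl Gg scalemx1.
  rewrite Gv !mxE sum1 /ev !mxE (negPf kn2) /=; ring.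
have Eq a b : beta (ev C a) (ev C b) *: (D *m v)
   = (beta (Dt *m ev C a) (ev C b) + beta (ev C a) (Dt *m ev C b)) *: v.
  move: (hD (g *m ev C a) (g *m ev C b)).
  rewrite !bappE -/G -/v => E.
  rewrite ![G *m (g *m _)]mulmxA Gg !mul1mx ![G *m (D *m _)]mulmxA in E.
  rewrite -scalemxAr -scalerDl ![G *m D *m (g *m _)]mulmxA in E; exact: E.
have E00 : 1 *: (D *m v) = (2 * Dt i0 i0) *: v.
  by apply: (@scal_eq _ _ _ _ _ _ (Eq i0 i0)); rewrite /beta ?colev /ev ?mxE /=; ring.
have E01 : 1 *: (D *m v) = (Dt i0 i0 + Dt i0 i1 + Dt i1 i1) *: v.
  by apply: (@scal_eq _ _ _ _ _ _ (Eq i0 i1)); rewrite /beta ?colev /ev ?mxE /=; ring.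
have E10 : (-1) *: (D *m v) = (Dt i0 i1 - Dt i1 i1 - Dt i0 i0) *: v.
  by apply: (@scal_eq _ _ _ _ _ _ (Eq i1 i0)); rewrite /beta ?colev /ev ?mxE /=; ring.
have E12 : 0 *: (D *m v) = (- Dt i0 i2) *: v.
  by apply: (@scal_eq _ _ _ _ _ _ (Eq i1 i2)); rewrite /beta ?colev /ev ?mxE /=; ring.
rewrite scale1r in E00.
rewrite scale1r E00 in E01.
rewrite E00 scalerA in E10.
rewrite scale0r -(scale0r v) in E12.
have a1 := @scal_cancel _ _ _ vn0 E01.
have a2 := @scal_cancel _ _ _ vn0 E10.
have a3 := @scal_cancel _ _ _ vn0 E12.
have i02 : i0 != i2 by [].
have i12 : i1 != i2 by [].
have e11 : Dt i1 i1 = Dt i0 i0 - Dt i0 i1.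
  transitivity (Dt i0 i0 + Dt i0 i1 + Dt i1 i1 - Dt i0 i0 - Dt i0 i1); first by ring.
  by rewrite -a1; ring.
have e01 : 2 * Dt i0 i1 = 0.
  transitivity (Dt i0 i1 - (Dt i0 i0 - Dt i0 i1) - Dt i0 i0 + 2 * Dt i0 i0); first by ring.
  by rewrite -e11 -a2; ring.
have n2 : (2 : C) != 0 by rewrite pnatr_eq0.
have nn : - (2 * nv) != 0 by rewrite oppr_eq0 mulf_neq0.
have K01 : K i0 i1 = 0.
  move/eqP: e01; rewrite mulf_eq0 (negPf n2) /= (DtE _ _ i02) /= mulr0 subr0.
  by rewrite mulf_eq0 (negPf nn) => /eqP.
have K02 : K i0 i2 = 0.
  move/eqP: a3; rewrite eq_sym oppr_eq0 (DtE _ _ i02) /= mulr0 subr0.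
  by rewrite mulf_eq0 (negPf nn) => /eqP.
have K11 : K i1 i1 = K i0 i0.
  move: e11; rewrite (DtE _ _ i02) (DtE _ _ i12) (DtE _ _ i02) /=.
  rewrite K01 !mulr0 !subr0 => /addIr /(mulfI nn).
  by [].
have b0 : \sum_l G i0 l * v l 0 = 0.
  by move: (congr1 (fun M : 'cV[C]_3 => M i0 0) Gv); rewrite !mxE /=.
have b1 : \sum_l G i1 l * v l 0 = 0.
  by move: (congr1 (fun M : 'cV[C]_3 => M i1 0) Gv); rewrite !mxE /=.
have hv1 m : \sum_l h m l * v l 0 = 0.
  transitivity (G i0 m * (\sum_l G i0 l * v l 0) + G i0 m * (\sum_l G i1 l * v l 0)
     - G i1 m * (\sum_l G i0 l * v l 0)).
    by rewrite /h !sum3 !mxE; ring.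
  by rewrite b0 b1; ring.
have hv2 m : \sum_l h l m * v l 0 = 0.
  transitivity (G i0 m * (\sum_l G i0 l * v l 0) + G i1 m * (\sum_l G i0 l * v l 0)
     - G i0 m * (\sum_l G i1 l * v l 0)).
    by rewrite /h !sum3 !mxE; ring.
  by rewrite b0 b1; ring.
have Qv : Q *m v = 0.
  apply/matrixP => k j; rewrite (ord1 j) [RHS]mxE /Q Qmat_mulv.
  by rewrite big1 // => m _; rewrite hv1 hv2; ring.
have K22 : K i2 i2 = 0.
  by rewrite -colev /K -!mulmxA -/v Qv !mulmx0 mxE.
have KG : K *m G = G *m Q by rewrite /K -mulmxA gG mulmx1.
have trK : \tr K = \tr Q by rewrite /K mxtrace_mulC mulmxA gG mul1mx.
clearbody K.
have GQ l : \sum_k G i0 k * Q k l = K i0 i0 * G i0 l.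
  have := congr1 (fun M : 'M[C]_3 => M i0 l) KG; rewrite !mxE !sum3 K01 K02 => E.
  by rewrite -E; ring.
have trQ : \tr Q = K i0 i0 + K i0 i0.
  by rewrite -trK /mxtrace sum3 K11 K22 addr0.
set nw := \sum_m G i0 m * (G i0 m)^*.
have key := key_identity (fun k => G i0 k) (fun k => G i1 k).
rewrite /= -/h -/Q -/nw in key.
rewrite (eq_bigr (fun l => K i0 i0 * (G i0 l * (G i0 l)^*))) in key;
  last by move=> l _; rewrite GQ mulrA.
rewrite -mulr_sumr -/nw trQ in key.
have nw3 : 2 * nw ^+ 3 = 0 by rewrite -key; ring.
have nw0 : nw = 0.
  move/eqP: nw3; rewrite mulf_eq0 (negPf n2) /= expf_eq0 /=.
  by move/eqP.
have w0 := @normsum3 (fun m => G i0 m) nw0.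
move: (congr1 (fun M : 'M[C]_3 => M i0 i0) Gg); rewrite !mxE sum3 !w0 /=.
by rewrite !mul0r !addr0 => /eqP; rewrite eq_sym oner_eq0.
Qed.
End S.

Theorem proposition5p2 (R : realType) (g : 'M[R[i]]_3) :
  g \in unitmx -> ~ critical (act g (@d21 R[i])).
Proof. exact: (@main R[i] g). Qed.
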